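(* Let $(N,v)$ be a cooperative game given by nonnegative integers $k,w_1,\ldots,w_{|N|}$ with $v(S)=\max_{S'\subseteq S:\ |S'|\le k}\sum_{j\in S'}w_j$ (the sum of the $k$ largest weights in $S$). Then the Shapley value of any given agent can be computed in time $O(|N|^3)$.
   Context: The Shapley value of agent $i$ in a cooperative game $(N,v)$ is $\phi_i(v)=\sum_{S\subseteq N\setminus\{i\}}\frac{|S|!\,(|N|-|S|-1)!}{|N|!}\big(v(S\cup\{i\})-v(S)\big)$. Running times count arithmetic operations at unit cost. *)

(* Defs.v *)
From HB Require Import structures.
From mathcomp Require Import all_boot all_order all_algebra.
Set Implicit Arguments. Unset Strict Implicit. Unset Printing Implicit Defensive.
Import Order.TTheory GRing.Theory Num.Theory.
Local Open Scope ring_scope.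

Definition shapley (n : nat) (v : {set 'I_n} -> rat) (i : 'I_n) : rat :=
  \sum_(S : {set 'I_n} | i \notin S)
     ((#|S|`! * (n - #|S| - 1)`!)%:R / (n`!)%:R) * (v (i |: S) - v S).

Definition topk_game (n k : nat) (w : 'I_n -> nat) (S : {set 'I_n}) : nat :=
  \max_(S' : {set 'I_n} | (S' \subset S) && (#|S'| <= k)%N) \sum_(j in S') w j.

(* Programs are structured
   (while-)programs; every executed atomic instruction and every evaluated test
   costs one unit, so arithmetic operations (+,-,*,/) and comparisons are unit cost. *)
Definition memory := rat -> rat.

Inductive operand :=
| Const of rat
| Dir of rat
| Ind of rat.

Inductive dest :=
| DDir of rat
| DInd of rat.

Inductive binop := Add | Sub | Mul | Div.
Inductive test := TLe | TLt | TEq.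

Inductive cmd :=
| Move of dest & operand
| Arith of binop & dest & operand & operand
| Seq of cmd & cmd
| IfT of test & operand & operand & cmd & cmd
| WhileT of test & operand & operand & cmd.

Definition upd (m : memory) (a x : rat) : memory := fun b => if b == a then x else m b.

Definition eval_opnd (m : memory) (o : operand) : rat :=
  match o with Const q => q | Dir a => m a | Ind a => m (m a) end.

Definition addr (m : memory) (d : dest) : rat :=
  match d with DDir a => a | DInd a => m a end.

Definition eval_binop (o : binop) (x y : rat) : rat :=
  match o with Add => x + y | Sub => x - y | Mul => x * y | Div => x / y end.

Definition eval_test (t : test) (x y : rat) : bool :=
  match t with TLe => x <= y | TLt => x < y | TEq => x == y end.

Inductive exec : memory -> cmd -> nat -> memory -> Prop :=
| EMove m d x :
    exec m (Move d x) 1 (upd m (addr m d) (eval_opnd m x))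
| EArith m o d x y :
    exec m (Arith o d x y) 1
      (upd m (addr m d) (eval_binop o (eval_opnd m x) (eval_opnd m y)))
| ESeq m1 m2 m3 c1 c2 t1 t2 :
    exec m1 c1 t1 m2 -> exec m2 c2 t2 m3 -> exec m1 (Seq c1 c2) (t1 + t2) m3
| EIfTrue m m' tt x y c1 c2 t :
    eval_test tt (eval_opnd m x) (eval_opnd m y) = true ->
    exec m c1 t m' -> exec m (IfT tt x y c1 c2) t.+1 m'
| EIfFalse m m' tt x y c1 c2 t :
    eval_test tt (eval_opnd m x) (eval_opnd m y) = false ->
    exec m c2 t m' -> exec m (IfT tt x y c1 c2) t.+1 m'
| EWhileFalse m tt x y c :
    eval_test tt (eval_opnd m x) (eval_opnd m y) = false ->
    exec m (WhileT tt x y c) 1 m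
| EWhileTrue m m1 m2 tt x y c t1 t2 :
    eval_test tt (eval_opnd m x) (eval_opnd m y) = true ->
    exec m c t1 m1 -> exec m1 (WhileT tt x y c) t2 m2 ->
    exec m (WhileT tt x y c) (t1 + t2).+1 m2.

(* Input encoding: M[0] = n, M[1] = k, M[2] = i (0-based agent index),
   M[3+j] = w_j for j < n, all other cells 0. Output: M[0] at halting. *)
Definition init_mem (n k : nat) (w : 'I_n -> nat) (i : 'I_n) : memory :=
  fun a => if a == 0 then n%:R
           else if a == 1 then k%:R
           else if a == 2 then (i : nat)%:R
           else \sum_(j < n | a == (3 + j)%:R) (w j)%:R.

(* Main.v *)
Require Import Defs.
From mathcomp Require Import all_boot all_order all_algebra.
From mathcomp Require Import zify ring lra.
Set Implicit Arguments. Unset Strict Implicit. Unset Printing Implicit Defensive.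
Import Order.TTheory GRing.Theory Num.Theory.
Local Open Scope ring_scope.

Lemma sum_lt W x : (\sum_(t < W) (t < x)%N = minn W x)%N.
Proof.
elim: W => [|W IH]; first by rewrite big_ord0 min0n.
rewrite big_ord_recr /= IH; case: ltnP => h /=; lia.
Qed.

Definition Aset n (w : 'I_n -> nat) (t : nat) : {set 'I_n} := [set j | (t < w j)%N].

Definition lvl n k (w : 'I_n -> nat) W (S : {set 'I_n}) : nat :=
  \sum_(t < W) minn k #|S :&: Aset w t|.

Lemma sum_card_cond n (S : {set 'I_n}) (P : pred 'I_n) :
  (\sum_(j in S) (P j : nat) = #|S :&: [set j | P j]|)%N.
Proof.
rewrite -big_mkcondr /= sum1_card; apply: eq_card => j; by rewrite !inE.
Qed.

Lemma topk_le n k (w : 'I_n -> nat) W S : (forall j, w j <= W)%N ->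
  (topk_game k w S <= lvl k w W S)%N.
Proof.
move=> hW; apply/bigmax_leqP => S' /andP [sub ck].
have -> : (\sum_(j in S') w j = \sum_(t < W) #|S' :&: Aset w t|)%N.
  transitivity (\sum_(j in S') \sum_(t < W) (t < w j)%N)%N.
    by apply: eq_bigr => j _; rewrite sum_lt; apply/esym/minn_idPr.
  rewrite exchange_big; apply: eq_bigr => t _; by rewrite sum_card_cond.
apply: leq_sum => t _; rewrite leq_min; apply/andP; split.
  by apply: leq_trans ck; apply: subset_leq_card; apply: subsetIl.
by apply: subset_leq_card; apply: setSI.
Qed.
Lemma topk_ge n (w : 'I_n -> nat) W : (forall j, w j <= W)%N ->
  forall k (S : {set 'I_n}), exists S' : {set 'I_n},
    [/\ S' \subset S, (#|S'| <= k)%N & (lvl k w W S <= \sum_(j in S') w j)%N].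
Proof.
move=> hW; elim=> [|k IH] S.
  exists set0; split; [exact: sub0set | by rewrite cards0 |].
  by rewrite /lvl big1 // => t _; rewrite min0n.
have [->|[j0 j0S]] := set_0Vmem S.
  exists set0; split; [exact: sub0set | by rewrite cards0 |].
  by rewrite /lvl big1 // => t _; rewrite set0I cards0 minn0.
case: (arg_maxnP w j0S) => j jS jmax.
have [S'' [sub ck hl]] := IH (S :\ j).
have jS'' : j \notin S''.
  apply/negP => /(subsetP sub); by rewrite !inE eqxx.
exists (j |: S''); split.
- apply/subsetP => x; rewrite !inE => /orP [/eqP -> //|/(subsetP sub)].
  by rewrite !inE => /andP [].
- by rewrite cardsU1 jS''.
rewrite big_setU1 //=.
apply: leq_trans (leq_add (leqnn (w j)) hl).
have -> : w j = (\sum_(t < W) (t < w j)%N)%N by rewrite sum_lt; apply/esym/minn_idPr.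
rewrite /lvl -big_split /=; apply: leq_sum => t _.
case: (ltnP t (w j)) => htj /=.
  have -> : S :&: Aset w t = j |: ((S :\ j) :&: Aset w t).
    apply/setP => x; rewrite !inE; case: (eqVneq x j) => [->|] //=.
    by rewrite htj andbT; exact: jS.
  rewrite cardsU1 !inE eqxx /= add1n; lia.
have -> : S :&: Aset w t = set0.
  apply/setP => x; rewrite !inE; apply/negbTE; apply/negP => /andP [xS xt].
  have := jmax x xS; lia.
by rewrite cards0 minn0.
Qed.

Lemma topk_lvl n k (w : 'I_n -> nat) W S : (forall j, w j <= W)%N ->
  topk_game k w S = lvl k w W S.
Proof.
move=> hW; apply/eqP; rewrite eqn_leq topk_le //=.
have [S' [sub ck hl]] := topk_ge hW k S.
apply: leq_trans hl _; rewrite /topk_game; apply: (leq_bigmax_cond (F := fun S' : {set 'I_n} => \sum_(j in S') w j) S').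
by rewrite sub ck.
Qed.
Lemma lvl_add n k (w : 'I_n -> nat) W (S : {set 'I_n}) (i : 'I_n) :
  i \notin S -> (w i <= W)%N ->
  lvl k w W (i |: S) = (lvl k w W S + \sum_(t < w i) (#|S :&: Aset w t| < k)%N)%N.
Proof.
move=> iS hi; rewrite /lvl.
rewrite (big_ord_widen W (fun t => (#|S :&: Aset w t| < k)%N : nat) hi).
rewrite [X in (_ + X)%N]big_mkcond /= -big_split /=; apply: eq_bigr => t _.
have -> : (i |: S) :&: Aset w t =
   if (t < w i)%N then i |: (S :&: Aset w t) else S :&: Aset w t.
  apply/setP => x; case: ifP => h; rewrite !inE; case: (eqVneq x i) => [->|] //=; by rewrite h ?andbF.
case: ifP => h; last by rewrite addn0.
rewrite cardsU1 !inE (negbTE iS) /=; case: ltnP => hk /=; lia.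
Qed.

Definition Wmax n (w : 'I_n -> nat) : nat := \max_j w j.
Lemma Wmax_ge n (w : 'I_n -> nat) j : (w j <= Wmax w)%N.
Proof. exact: (leq_bigmax (F := w) j). Qed.

Lemma marginal n k (w : 'I_n -> nat) (S : {set 'I_n}) (i : 'I_n) :
  i \notin S ->
  (topk_game k w (i |: S))%:R - (topk_game k w S)%:R =
  ((\sum_(t < w i) (#|S :&: Aset w t| < k)%N)%N)%:R :> rat.
Proof.
move=> iS; rewrite !(topk_lvl k _ (@Wmax_ge n w)) lvl_add //; last exact: Wmax_ge.
by rewrite natrD addrAC subrr add0r.
Qed.
Definition fct (j : nat) : rat := (j`!)%:R.
Definition cS (n s : nat) : rat := ((s`! * (n - s - 1)`!)%:R / (n`!)%:R).
Definition termv (n m x y : nat) : rat :=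
  fct (m-1) / fct x / fct (m-1-x) * fct (n-m) / fct y / fct (n-m-y)
  * fct (x+y) * fct (n - (x+y) - 1) / fct n.
Definition Hterm (n k a : nat) : rat :=
  \sum_(x < a) (if (x < k)%N then \sum_(y < n - a + 1) termv n a x y else 0).

Lemma fct_neq0 j : fct j != 0.
Proof. by rewrite /fct pnatr_eq0 -lt0n fact_gt0. Qed.

Lemma binr p q : (q <= p)%N -> ('C(p,q))%:R = fct p / fct q / fct (p - q) :> rat.
Proof.
move=> h; have := bin_fact h; move/(congr1 (fun x => x%:R : rat)).
rewrite !natrM -/(fct p) -/(fct q) -/(fct (p - q)) => e.
rewrite -e; have := fct_neq0 q; have := fct_neq0 (p - q); move=> h1 h2; field.
by rewrite h1 h2.
Qed.

Lemma sum_subsets (T : finType) (B : {set T}) (G : nat -> rat) :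
  \sum_(X : {set T} | X \subset B) G #|X| =
  \sum_(x < #|B|.+1) ('C(#|B|, x))%:R * G x.
Proof.
transitivity (\sum_(X : {set T} | X \subset B)
                \sum_(x < #|B|.+1) ((#|X| == x)%:R * G x)).
  apply: eq_bigr => X sub.
  have hX : (#|X| < #|B|.+1)%N by rewrite ltnS subset_leq_card.
  rewrite (bigD1 (Ordinal hX)) //= eqxx mul1r big1 ?addr0 // => x hx.
  rewrite (_ : (#|X| == x) = false) ?mul0r //.
  apply: contraNF hx => /eqP e; apply/eqP/val_inj; by rewrite /= e.
rewrite exchange_big; apply: eq_bigr => x _; rewrite -mulr_suml; congr (_ * _).
rewrite -cards_draws -natr_sum; congr (_%:R).
rewrite -big_mkcondr /= sum1_card; apply: eq_card => X; by rewrite !inE.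
Qed.
Lemma split_sum n (i : 'I_n) (B : {set 'I_n}) (F : {set 'I_n} -> rat) : i \in B ->
  \sum_(S : {set 'I_n} | i \notin S) F S =
  \sum_(X : {set 'I_n} | X \subset B :\ i) \sum_(Y : {set 'I_n} | Y \subset ~: B) F (X :|: Y).
Proof.
move=> iB; rewrite pair_big /=.
pose D := [pred p : {set 'I_n} * {set 'I_n} | (p.1 \subset B :\ i) && (p.2 \subset ~: B)].
have inj : {in D &, injective (fun p : {set 'I_n} * {set 'I_n} => p.1 :|: p.2)}.
  move=> [X Y] [X' Y'] /andP [/= hX hY] /andP [/= hX' hY'] /= e.
  have eX : forall X Y : {set 'I_n}, X \subset B :\ i -> Y \subset ~: B -> (X :|: Y) :&: B = X.
    move=> U V hU hV; apply/setP => x; rewrite !inE.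
    case xU: (x \in U); first by have := subsetP hU x xU; rewrite !inE => /andP [_ ->].
    case xV: (x \in V) => //=; by have := subsetP hV x xV; rewrite !inE => /negbTE ->.
  have eY : forall X Y : {set 'I_n}, X \subset B :\ i -> Y \subset ~: B -> (X :|: Y) :&: ~: B = Y.
    move=> U V hU hV; apply/setP => x; rewrite !inE.
    case xV: (x \in V); first by have := subsetP hV x xV; rewrite !inE => ->; rewrite orbT.
    case xU: (x \in U) => //=; by have := subsetP hU x xU; rewrite !inE => /andP [_ ->].
  by have := eX X Y hX hY; have := eY X Y hX hY; rewrite e eX // eY // => -> ->.
rewrite -(big_imset _ inj) /=; apply: eq_bigl => S.
apply/idP/imsetP.
  move=> iS; exists (S :&: (B :\ i), S :&: ~: B).
    rewrite inE /=; apply/andP; split; apply: subsetIr.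
  apply/setP => x; rewrite !inE.
  case xS: (x \in S) => //=; case: (eqVneq x i) => [e|] /=.
    by move: iS; rewrite -e xS.
  by case: (x \in B).
move=> [[X Y]] /andP [/= hX hY] ->; rewrite !inE negb_or.
apply/andP; split; apply/negP.
  by move/(subsetP hX); rewrite !inE eqxx.
by move/(subsetP hY); rewrite !inE iB.
Qed.
Lemma count_lemma n k (i : 'I_n) (B : {set 'I_n}) : i \in B ->
  \sum_(S : {set 'I_n} | i \notin S) cS n #|S| * ((#|S :&: B| < k)%N)%:R
  = Hterm n k #|B|.
Proof.
move=> iB; rewrite (split_sum (fun S => cS n #|S| * ((#|S :&: B| < k)%N)%:R) iB).
transitivity (\sum_(X : {set 'I_n} | X \subset B :\ i)
   \sum_(Y : {set 'I_n} | Y \subset ~: B) (cS n (#|X| + #|Y|) * ((#|X| < k)%N)%:R)).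
  apply: eq_bigr => X hX; apply: eq_bigr => Y hY.
  have dis : X :&: Y = set0.
    apply/setP => x; rewrite !inE; apply/negbTE/negP => /andP [xX xY].
    have := subsetP hX x xX; have := subsetP hY x xY; rewrite !inE => /negbTE ->.
    by rewrite andbF.
  have eX : (X :|: Y) :&: B = X.
    apply/setP => x; rewrite !inE.
    case xU: (x \in X); first by have := subsetP hX x xU; rewrite !inE => /andP [_ ->].
    case xV: (x \in Y) => //=; by have := subsetP hY x xV; rewrite !inE => /negbTE ->.
  by rewrite cardsU dis cards0 subn0 eX.
rewrite (eq_bigr (fun X : {set 'I_n} => \sum_(y < #|~: B|.+1) ('C(#|~:B|,y))%:R *
           (cS n (#|X| + y) * ((#|X| < k)%N)%:R))); last first.
  move=> X _; exact: (sum_subsets (~: B) (fun y => cS n (#|X| + y) * ((#|X| < k)%N)%:R)).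
rewrite (sum_subsets (B :\ i) (fun x => \sum_(y < #|~: B|.+1) ('C(#|~:B|,y))%:R *
           (cS n (x + y) * ((x < k)%N)%:R))).
have a1 : (0 < #|B|)%N by apply/card_gt0P; exists i.
have hB' : #|B :\ i| = (#|B| - 1)%N by rewrite (cardsD1 i B) iB add1n subn1.
have hC : #|~: B| = (n - #|B|)%N by rewrite cardsCs setCK card_ord.
rewrite hB' hC /Hterm subn1 prednK // addn1.
apply: eq_bigr => x _; case: ifP => hk; last first.
  by rewrite big1 ?mulr0 // => y _; rewrite mulr0 mulr0.
rewrite mulr_sumr; apply: eq_bigr => y _.
have hx : (x <= #|B|.-1)%N by rewrite -ltnS prednK.
have hy : (y <= n - #|B|)%N by rewrite -ltnS.
rewrite binr // binr // /termv /cS natrM -/(fct _) -/(fct _) -/(fct _) -subn1 mulr1.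
ring.
Qed.
Lemma shapley_H n k (w : 'I_n -> nat) (i : 'I_n) :
  shapley (fun S => (topk_game k w S)%:R) i = \sum_(t < w i) Hterm n k #|Aset w t|.
Proof.
rewrite /shapley.
transitivity (\sum_(S : {set 'I_n} | i \notin S)
   \sum_(t < w i) cS n #|S| * ((#|S :&: Aset w t| < k)%N)%:R).
  apply: eq_bigr => S iS; by rewrite marginal // natr_sum mulr_sumr.
rewrite exchange_big; apply: eq_bigr => t _; apply: count_lemma.
by rewrite inE.
Qed.

Definition Hs n k a : rat := if a is 0 then 0 else Hterm n k a.
Definition cnt n (w : 'I_n -> nat) (j : 'I_n) : nat := (\sum_(l < n) (w j <= w l)%N)%N.
Definition umax n (w : 'I_n -> nat) (mm : nat) : nat := (\max_(j | (mm <= cnt w j)%N) w j)%N.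
Definition formula n k (w : 'I_n -> nat) (i : 'I_n) : rat :=
  \sum_(m < n) (Hs n k m.+1 - Hs n k m) * (minn (w i) (umax w m.+1))%:R.

Lemma cnt_card n (w : 'I_n -> nat) j : cnt w j = #|[set l | (w j <= w l)%N]|.
Proof.
rewrite /cnt -sum1_card [RHS]big_mkcond /=; apply: eq_bigr => l _; by rewrite inE; case: ifP.
Qed.

Lemma key n (w : 'I_n -> nat) (i : 'I_n) t mm : (t < w i)%N ->
  (mm <= #|Aset w t|)%N = (t < umax w mm)%N.
Proof.
move=> ti; apply/idP/idP => h.
  case: (arg_minnP w (P := fun j => (t < w j)%N) ti) => j tj jmin.
  apply: leq_trans tj _; rewrite /umax.
  apply: (leq_bigmax_cond (F := w) j); rewrite cnt_card; apply: leq_trans h _.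
  apply: subset_leq_card; apply/subsetP => l; rewrite !inE => hl; exact: jmin.
case: (boolP [exists j, (mm <= cnt w j)%N && (t < w j)%N]).
  move=> /existsP [j /andP [hj tj]]; apply: leq_trans hj _; rewrite cnt_card.
  apply: subset_leq_card; apply/subsetP => l; rewrite !inE => hl; lia.
move=> /existsPn hn; exfalso; move: h; rewrite ltnNge => /negP; apply.
apply/bigmax_leqP => j hj; have := hn j; rewrite hj /=; lia.
Qed.

Lemma abel n k (w : 'I_n -> nat) (i : 'I_n) :
  \sum_(t < w i) Hterm n k #|Aset w t| = formula k w i.
Proof.
transitivity (\sum_(t < w i) \sum_(m < n)
                 ((m < #|Aset w t|)%N)%:R * (Hs n k m.+1 - Hs n k m)).
  apply: eq_bigr => t _.
  have ia : i \in Aset w t by rewrite inE.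
  have a1 : (0 < #|Aset w t|)%N by apply/card_gt0P; exists i.
  have an : (#|Aset w t| <= n)%N by rewrite -[X in (_ <= X)%N]card_ord max_card.
  have -> : Hterm n k #|Aset w t| = Hs n k #|Aset w t| - Hs n k 0.
    by rewrite /Hs subr0; case: #|Aset w t| a1.
  rewrite -telescope_sumr // big_mkord (big_ord_widen n (fun m => Hs n k m.+1 - Hs n k m) an) big_mkcond /=.
  by apply: eq_bigr => m _; case: ifP; rewrite ?mul1r ?mul0r.
rewrite exchange_big /formula; apply: eq_bigr => m _.
rewrite -mulr_suml mulrC; congr (_ * _).
rewrite -sum_lt natr_sum; apply: eq_bigr => t _; by rewrite (key m.+1 (ltn_ord t)).
Qed.

Theorem shapley_formula n k (w : 'I_n -> nat) (i : 'I_n) :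
  shapley (fun S => (topk_game k w S)%:R) i = formula k w i.
Proof. by rewrite shapley_H abel. Qed.

Definition run (m : memory) (c : cmd) (Q : memory -> Prop) (T : nat) : Prop :=
  exists t m', [/\ exec m c t m', (t <= T)%N & Q m'].

Lemma run_mono m c Q T T' : (T <= T')%N -> run m c Q T -> run m c Q T'.
Proof. move=> h [t [m' [e ht q]]]; exists t, m'; split => //; exact: leq_trans h. Qed.

Lemma run_weaken m c (Q Q' : memory -> Prop) T :
  (forall m, Q m -> Q' m) -> run m c Q T -> run m c Q' T.
Proof. move=> h [t [m' [e ht q]]]; exists t, m'; split => //; exact: h. Qed.

Lemma run_seq m c1 c2 Q T1 T2 :
  run m c1 (fun m1 => run m1 c2 Q T2) T1 -> run m (Seq c1 c2) Q (T1 + T2).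
Proof.
move=> [t1 [m1 [e1 h1 [t2 [m2 [e2 h2 q]]]]]]; exists (t1 + t2)%N, m2; split => //.
  exact: ESeq e1 e2.
exact: leq_add.
Qed.

Lemma run_arith m o d x y c Q T :
  run (upd m (addr m d) (eval_binop o (eval_opnd m x) (eval_opnd m y))) c Q T ->
  run m (Seq (Arith o d x y) c) Q T.+1.
Proof.
move=> h; rewrite -add1n; apply: run_seq; exists 1%N; eexists; split; [exact: EArith|by []|exact: h].
Qed.

Lemma run_move m d x c Q T :
  run (upd m (addr m d) (eval_opnd m x)) c Q T -> run m (Seq (Move d x) c) Q T.+1.
Proof.
move=> h; rewrite -add1n; apply: run_seq; exists 1%N; eexists; split; [exact: EMove|by []|exact: h].
Qed.

Lemma run_arith_end m o d x y (Q : memory -> Prop) T :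
  Q (upd m (addr m d) (eval_binop o (eval_opnd m x) (eval_opnd m y))) ->
  run m (Arith o d x y) Q T.+1.
Proof. move=> h; exists 1%N; eexists; split; [exact: EArith|by []|exact: h]. Qed.

Lemma run_move_end m d x (Q : memory -> Prop) T :
  Q (upd m (addr m d) (eval_opnd m x)) -> run m (Move d x) Q T.+1.
Proof. move=> h; exists 1%N; eexists; split; [exact: EMove|by []|exact: h]. Qed.

Lemma run_if m tt x y c1 c2 Q T :
  (eval_test tt (eval_opnd m x) (eval_opnd m y) -> run m c1 Q T) ->
  (~~ eval_test tt (eval_opnd m x) (eval_opnd m y) -> run m c2 Q T) ->
  run m (IfT tt x y c1 c2) Q T.+1.
Proof.
case e: (eval_test tt (eval_opnd m x) (eval_opnd m y)) => h1 h2.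
  have [t [m' [ex ht q]]] := h1 isT; exists t.+1, m'; split => //.
  exact: EIfTrue.
have [t [m' [ex ht q]]] := h2 isT; exists t.+1, m'; split => //.
exact: EIfFalse.
Qed.

Lemma run_while m tt x y c (I : nat -> memory -> Prop) N Tb (Q : memory -> Prop) :
  I 0%N m ->
  (forall j m, (j < N)%N -> I j m ->
      eval_test tt (eval_opnd m x) (eval_opnd m y) /\ run m c (I j.+1) Tb) ->
  (forall m, I N m -> eval_test tt (eval_opnd m x) (eval_opnd m y) = false /\ Q m) ->
  run m (WhileT tt x y c) Q (N * Tb.+1).+1.
Proof.
move=> h0 hs hN.
suff: forall d j m, (j + d = N)%N -> I j m -> run m (WhileT tt x y c) Q (d * Tb.+1).+1.
  by move=> /(_ N 0%N m); rewrite add0n; apply.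
elim=> [|d IH] j m1 hj hI.
  rewrite addn0 in hj; subst j; have [hf q] := hN m1 hI.
  exists 1%N, m1; split => //; exact: EWhileFalse.
have ltj : (j < N)%N by rewrite -hj addnS ltnS leq_addr.
have [ht [t1 [m2 [e1 h1 q1]]]] := hs j m1 ltj hI.
have hj' : (j.+1 + d = N)%N by rewrite addSnnS.
have [t2 [m3 [e2 h2 q2]]] := IH j.+1 m2 hj' q1.
exists (t1 + t2).+1, m3; split => //; first exact: EWhileTrue e1 e2.
rewrite mulSn; lia.
Qed.

Definition reg (r : nat) : rat := - (r.+1)%:R.
Notation factA j := (-30 - (j)%:R : rat).
Notation cntA n j := (-31 - (n)%:R - (j)%:R : rat).

Lemma upd_same m a v : upd m a v a = v.
Proof. by rewrite /upd eqxx. Qed.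
Lemma upd_other m a b v : (b == a) = false -> upd m a v b = m b.
Proof. by rewrite /upd => ->. Qed.

Lemma reg_neg r : reg r < 0.
Proof. by rewrite /reg oppr_lt0 ltr0Sn. Qed.

Lemma reg_eq s r : (reg s == reg r) = (s == r).
Proof. by rewrite /reg eqr_opp eqr_nat. Qed.

Definition Inp n k (w : 'I_n -> nat) (i : 'I_n) (m : memory) :=
  [/\ m 0 = n%:R, m 1 = k%:R, m 2 = (i : nat)%:R &
      forall l : 'I_n, m ((l : nat)%:R + 3) = (w l)%:R].

Definition FT (m : memory) F := forall j, (j < F)%N -> m (factA j) = (j`!)%:R.
Definition CT n (cnt : 'I_n -> nat) (m : memory) C :=
  forall j : 'I_n, (j < C)%N -> m (cntA n j) = (cnt j)%:R.

Lemma Inp_upd n k w i m m1 a v : m1 = upd m a v -> a < 0 ->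
  @Inp n k w i m -> Inp k w i m1.
Proof.
move=> -> ha [h0 h1 h2 h3]; split.
- by rewrite upd_other // gt_eqF.
- by rewrite upd_other // gt_eqF // (lt_trans ha).
- by rewrite upd_other // gt_eqF // (lt_trans ha).
- move=> l; rewrite upd_other // gt_eqF // (lt_le_trans ha) //.
  by rewrite addr_ge0 // ler0n.
Qed.

Lemma FT_updR m m1 r v F : m1 = upd m (reg r) v -> (r < 29)%N -> FT m F -> FT m1 F.
Proof.
move=> -> hr h j hj; rewrite upd_other ?h //; apply: lt_eqF.
rewrite /reg; have := ler0n rat j.
have : (r.+1)%:R < 30 :> rat by rewrite ltr_nat; lia.
move=> *; lra.
Qed.

Lemma CT_updR n (cn : 'I_n -> nat) m m1 r v C : m1 = upd m (reg r) v -> (r < 29)%N ->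
  CT cn m C -> CT cn m1 C.
Proof.
move=> -> hr h j hj; rewrite upd_other ?h //; apply: lt_eqF.
rewrite /reg; have := ler0n rat n; have := ler0n rat j.
have : (r.+1)%:R < 30 :> rat by rewrite ltr_nat; lia.
move=> *; lra.
Qed.

Lemma regE_other m m1 r s v x : m1 = upd m (reg r) v -> (s == r) = false ->
  m (reg s) = x -> m1 (reg s) = x.
Proof. by move=> -> h <-; rewrite upd_other // reg_eq. Qed.

Lemma regE_same m m1 r v : m1 = upd m (reg r) v -> m1 (reg r) = v.
Proof. by move=> ->; rewrite upd_same. Qed.

Ltac ev := cbn [eval_opnd addr eval_binop eval_test].
Ltac rwregs := repeat match goal with H : _ (reg _) = _ |- _ => rewrite H end.

Ltac wreg :=
  lazymatch goal with |- context[upd ?m (reg ?r0) ?v] =>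
    let m1 := fresh "m" in let E := fresh "E" in
    remember (upd m (reg r0) v) as m1 eqn:E;
    pose proof (regE_same E);
    repeat match goal with
    | H : Inp _ _ _ m |- _ => pose proof (Inp_upd E (reg_neg r0) H); clear H
    | H : FT m _ |- _ => pose proof (FT_updR E isT H); clear H
    | H : CT _ m _ |- _ => pose proof (CT_updR E isT H); clear H
    | H : m (reg ?s) = _ |- _ =>
        first [ pose proof (@regE_other _ _ _ s _ _ E (erefl false) H); clear H | clear H ]
    end;
    clear E
  end.

Lemma factA_le j : factA j <= -30.
Proof. have := ler0n rat j; move=> *; lra. Qed.
Lemma cntA_le n j : cntA n j <= -30.
Proof. have := ler0n rat j; have := ler0n rat n; move=> *; lra. Qed.
Lemma m30_lt0 : -30 < 0 :> rat. Proof. lra. Qed.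

Lemma regE_far m m1 a s v x : m1 = upd m a v -> a <= -30 -> (s < 29)%N ->
  m (reg s) = x -> m1 (reg s) = x.
Proof.
move=> -> ha hs <-; rewrite upd_other //; apply/negbTE/eqP => e.
have : (s.+1)%:R < 30 :> rat by rewrite ltr_nat; lia.
move: e; rewrite /reg => e h; lra.
Qed.

Ltac wtab m1 E :=
  lazymatch goal with |- context[upd ?m ?a ?v] =>
    let ha := fresh "ha" in
    remember (upd m a v) as m1 eqn:E;
    assert (ha : a <= -30) by (lazymatch a with
                                 | -31 - _ - _ => exact: cntA_le
                                 | -30 - _ => exact: factA_le
                                 | _ => lra end);
    repeat match goal with
    | H : Inp _ _ _ m |- _ => pose proof (Inp_upd E (le_lt_trans ha m30_lt0) H); clear H
    | H : m (reg ?s) = _ |- _ => pose proof (@regE_far _ _ _ s _ _ E ha isT H); clear H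
    end; clear ha
  end.

Ltac rft := match goal with H : FT _ _ |- _ => rewrite H; last (by lia) end.

Lemma big_prefixS (R : Type) (idx : R) (op : Monoid.com_law idx) n (F : 'I_n -> R) l
  (hl : (l < n)%N) :
  \big[op/idx]_(j < n | (j < l.+1)%N) F j =
  op (\big[op/idx]_(j < n | (j < l)%N) F j) (F (Ordinal hl)).
Proof.
rewrite (bigD1 (Ordinal hl)) //= Monoid.mulmC; congr (op _ _).
apply: eq_bigl => j; rewrite ltnS leq_eqVlt; case: (ltnP j l) => h.
  rewrite orbT /=; apply/eqP => e; move: h; by rewrite e /= ltnn.
rewrite orbF; case: eqP => e //=; apply/negbTE; rewrite negbK; apply/eqP/val_inj; exact: e.
Qed.

Lemma big_prefix0 (R : Type) (idx : R) (op : Monoid.com_law idx) n (F : 'I_n -> R) :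
  \big[op/idx]_(j < n | (j < 0)%N) F j = idx.
Proof. by rewrite big_pred0. Qed.

Lemma big_prefixn (R : Type) (idx : R) (op : Monoid.com_law idx) n (F : 'I_n -> R) :
  \big[op/idx]_(j < n | (j < n)%N) F j = \big[op/idx]_(j < n) F j.
Proof. by apply: eq_bigl => j; rewrite ltn_ord. Qed.

Lemma Inp_wn n k w i m l (hl : (l < n)%N) : @Inp n k w i m ->
  m (l%:R + 3) = (w (Ordinal hl))%:R.
Proof. by case=> _ _ _ h; rewrite -h. Qed.

Lemma CT_ext n (cn : 'I_n -> nat) m m1 j (hj : (j < n)%N) v :
  m1 = upd m (cntA n j) v -> v = (cn (Ordinal hj))%:R -> CT cn m j -> CT cn m1 j.+1.
Proof.
move=> -> -> h l; rewrite ltnS leq_eqVlt => /orP [/eqP e|hl].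
  have -> : l = Ordinal hj by apply/val_inj.
  by rewrite /= upd_same.
rewrite upd_other ?h //; apply/negbTE; apply/eqP => e.
have : (l : nat)%:R = j%:R :> rat by lra.
by move/eqP; rewrite eqr_nat => /eqP ej; rewrite ej ltnn in hl.
Qed.

Lemma FT_far n m m1 j v F : m1 = upd m (cntA n j) v -> (F <= n.+1)%N -> FT m F -> FT m1 F.
Proof.
move=> -> hF h l hl; rewrite upd_other ?h //; apply/negbTE/eqP => e.
have : l%:R <= n%:R :> rat by rewrite ler_nat; lia.
have := ler0n rat j; move: e => *; lra.
Qed.

Ltac inv := repeat match goal with |- _ /\ _ => split | |- ?a = ?a => reflexivity | |- _ => assumption end.
Ltac rw_w h := match goal with H : Inp _ _ _ _ |- _ => rewrite (Inp_wn h H) end.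

Lemma CT_get n (cn : 'I_n -> nat) m C j (hj : (j < n)%N) : CT cn m C -> (j < C)%N ->
  m (cntA n j) = (cn (Ordinal hj))%:R.
Proof. by move=> h hC; rewrite -(h (Ordinal hj)). Qed.
Ltac rw_c h := match goal with H : CT _ _ _ |- _ => rewrite (CT_get h H); last by [] end.

Notation rWI := 0%N. Notation rJ := 1%N. Notation rL := 2%N. Notation rC := 3%N.
Notation rP := 4%N. Notation rQ := 5%N. Notation rM := 6%N. Notation rU := 7%N.
Notation rG := 8%N. Notation rH := 9%N. Notation rHP := 10%N. Notation rRES := 11%N.
Notation rX := 12%N. Notation rY := 13%N. Notation rT := 14%N. Notation rT2 := 15%N.
Notation rNM := 16%N. Notation rBC := 17%N. Notation rIDX := 18%N.
Notation R r := (DDir (reg r)). Notation D r := (Dir (reg r)).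

Lemma nS1 j : (j.+1)%:R - 1 = j%:R :> rat.
Proof. by rewrite -natr1 addrK. Qed.

Lemma Inp_init n k (w : 'I_n -> nat) (i : 'I_n) : Inp k w i (init_mem k w i).
Proof.
rewrite /init_mem; split.
- by rewrite eqxx.
- by rewrite oner_eq0 eqxx.
- have -> : (2 == 0 :> rat) = false by apply/negbTE/eqP => h; lra.
  have -> : (2 == 1 :> rat) = false by apply/negbTE/eqP => h; lra.
  by rewrite eqxx.
move=> l; have hl := ler0n rat l.
have -> : (l%:R + 3 == 0 :> rat) = false by apply/negbTE/eqP => h; lra.
have -> : (l%:R + 3 == 1 :> rat) = false by apply/negbTE/eqP => h; lra.
have -> : (l%:R + 3 == 2 :> rat) = false by apply/negbTE/eqP => h; lra.
rewrite (bigD1 l) /=; last by rewrite -natrD addnC.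
rewrite big1 ?addr0 // => j /andP [hj hne].
exfalso; move: hj; rewrite -natrD eqr_nat addnC eqn_add2l => /eqP e.
by move: hne; rewrite (_ : l = j) ?eqxx //; apply/val_inj.
Qed.

Lemma FT_ext m m1 F v : m1 = upd m (factA F) v -> v = (F`!)%:R -> FT m F -> FT m1 F.+1.
Proof.
move=> -> -> h j; rewrite ltnS leq_eqVlt => /orP [/eqP ->|hj]; first by rewrite upd_same.
rewrite upd_other ?h //; apply/negbTE; apply/eqP => e.
have : j%:R = F%:R :> rat by lra.
by move/eqP; rewrite eqr_nat => /eqP ej; rewrite ej ltnn in hj.
Qed.

Lemma Inp_0 n k w i m : @Inp n k w i m -> m 0 = n%:R. Proof. by case. Qed.
Lemma Inp_1 n k w i m : @Inp n k w i m -> m 1 = k%:R. Proof. by case. Qed.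
Lemma Inp_2 n k w i m : @Inp n k w i m -> m 2 = (i : nat)%:R. Proof. by case. Qed.
Lemma Inp_w n k w i m : @Inp n k w i m -> forall l : 'I_n, m ((l : nat)%:R + 3) = (w l)%:R.
Proof. by case. Qed.
Ltac rinp := match goal with H : Inp _ _ _ ?m |- _ =>
  rewrite ?(Inp_0 H) ?(Inp_1 H) ?(Inp_2 H) ?(Inp_w H) end.

Definition Pwi := Seq (Arith Add (R rP) (Dir 2) (Const 3)) (Move (R rWI) (Ind (reg rP))).

Definition FBody :=
  Seq (Arith Defs.Sub (R rP) (Const (-30)) (D rJ))
 (Seq (Arith Defs.Sub (R rIDX) (D rJ) (Const 1))
 (Seq (Arith Defs.Sub (R rT) (Const (-30)) (D rIDX))
 (Seq (Arith Mul (R rQ) (Ind (reg rT)) (D rJ))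
 (Seq (Move (DInd (reg rP)) (D rQ))
      (Arith Add (R rJ) (D rJ) (Const 1)))))).

Definition Pfact :=
  Seq (Move (R rP) (Const (-30))) (Seq (Move (DInd (reg rP)) (Const 1))
 (Seq (Move (R rJ) (Const 1)) (WhileT TLe (D rJ) (Dir 0) FBody))).

Definition S1 n k (w : 'I_n -> nat) (i : 'I_n) (m : memory) :=
  Inp k w i m /\ m (reg rWI) = (w i)%:R.
Definition S2 n k (w : 'I_n -> nat) (i : 'I_n) (m : memory) :=
  [/\ Inp k w i m, m (reg rWI) = (w i)%:R & FT m n.+1].

Lemma seg_wi n k (w : 'I_n -> nat) (i : 'I_n) : run (init_mem k w i) Pwi (S1 k w i) 2.
Proof.
have HI := Inp_init k w i.
apply: run_arith; ev; rinp; wreg.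
apply: run_move_end; ev; rwregs; rinp; wreg; by split.
Qed.

Lemma seg_fact n k (w : 'I_n -> nat) (i : 'I_n) m :
  S1 k w i m -> run m Pfact (S2 k w i) (3 + (n * 7).+1).
Proof.
case=> HI HW.
apply: run_move; ev; wreg.
apply: run_move; ev; rwregs.
rewrite (_ : -30 = factA 0); last by rewrite subr0.
wtab m1 E.
have HF : FT m1 1 by apply: (FT_ext E) => //; move=> j.
clear E.
apply: run_move; ev; wreg.
apply: (run_while (I := fun j m => [/\ Inp k w i m, m (reg rWI) = (w i)%:R,
                                      FT m j.+1 & m (reg rJ) = (j.+1)%:R])).
- by split.
- move=> j ma hj [HI1 HW1 HF1 HJ1]; ev; rewrite HJ1 (Inp_0 HI1) ler_nat; split => //.
  apply: run_arith; ev; rwregs; wreg.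
  apply: run_arith; ev; rwregs; rewrite nS1; wreg.
  apply: run_arith; ev; rwregs; wreg.
  apply: run_arith; ev; rwregs; rft; wreg.
  apply: run_move; ev; rwregs; wtab mt E.
  have : FT mt j.+2.
    apply: (FT_ext E); last by match goal with H : FT _ _ |- _ => exact: H end.
    by rewrite factS natrM mulrC.
  clear E; intros.
  apply: run_arith_end; ev; rwregs; rewrite natr1; wreg; by split.
- move=> ma [HI1 HW1 HF1 HJ1]; ev; rewrite HJ1 (Inp_0 HI1) ler_nat ltnn; by split.
Qed.

Definition LBody :=
  Seq (Arith Add (R rP) (D rL) (Const 3))
 (Seq (IfT TLe (D rQ) (Ind (reg rP)) (Arith Add (R rC) (D rC) (Const 1)) (Move (R rT) (Const 0)))
      (Arith Add (R rL) (D rL) (Const 1))).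

Definition CBody :=
  Seq (Move (R rC) (Const 0)) (Seq (Move (R rL) (Const 0))
 (Seq (Arith Add (R rP) (D rJ) (Const 3)) (Seq (Move (R rQ) (Ind (reg rP)))
 (Seq (WhileT TLt (D rL) (Dir 0) LBody)
 (Seq (Arith Defs.Sub (R rP) (D rBC) (D rJ)) (Seq (Move (DInd (reg rP)) (D rC))
      (Arith Add (R rJ) (D rJ) (Const 1)))))))).

Definition Pcnt :=
  Seq (Arith Defs.Sub (R rBC) (Const (-31)) (Dir 0)) (Seq (Move (R rJ) (Const 0))
      (WhileT TLt (D rJ) (Dir 0) CBody)).

Definition S3 n k (w : 'I_n -> nat) (i : 'I_n) (m : memory) :=
  Inp k w i m /\ m (reg rWI) = (w i)%:R /\ FT m n.+1 /\ CT (cnt w) m n /\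
      m (reg rBC) = -31 - n%:R.

Lemma seg_cnt n k (w : 'I_n -> nat) (i : 'I_n) m :
  S2 k w i m -> run m Pcnt (S3 k w i) (2 + (n * (4 + ((n * (1 + (2 + 1)).+1).+1 + 3)).+1).+1).
Proof.
case=> HI HW HF.
have HC : CT (cnt w) m 0 by [].
apply: run_arith; ev; rinp; wreg.
apply: run_move; ev; wreg.
apply: (run_while (I := fun j m => Inp k w i m /\ m (reg rWI) = (w i)%:R /\ FT m n.+1 /\
          CT (cnt w) m j /\ m (reg rBC) = -31 - n%:R /\ m (reg rJ) = j%:R)).
- by inv.
- move=> j ma hj [HI1 [HW1 [HF1 [HC1 [HB1 HJ1]]]]]; ev; rewrite HJ1 (Inp_0 HI1) ltr_nat; split => //.
  apply: run_move; ev; wreg.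
  apply: run_move; ev; wreg.
  apply: run_arith; ev; rwregs; wreg.
  apply: run_move; ev; rwregs; rw_w hj.
  wreg.
  apply: run_seq.
  apply: (run_while (I := fun l m => Inp k w i m /\ m (reg rWI) = (w i)%:R /\ FT m n.+1 /\
          CT (cnt w) m j /\ m (reg rBC) = -31 - n%:R /\ m (reg rJ) = j%:R /\
          m (reg rQ) = (w (Ordinal hj))%:R /\ m (reg rL) = l%:R /\
          m (reg rC) = ((\sum_(l' < n | (l' < l)%N) (w (Ordinal hj) <= w l')%N)%N)%:R)).
  + inv; by rewrite big_pred0.
  + move=> l mb hl [HI2 [HW2 [HF2 [HC2 [HB2 [HJ2 [HQ2 [HL2 HS2]]]]]]]]; ev.
    rewrite HL2 (Inp_0 HI2) ltr_nat; split => //.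
    apply: run_arith; ev; rwregs; wreg.
    apply: run_seq.
    apply: run_if; ev; rwregs; rw_w hl; rewrite ?ler_nat.
    * move=> hle; apply: run_arith_end; ev; rwregs.
      rewrite (_ : ((\sum_(l' < n | (l' < l)%N) (w (Ordinal hj) <= w l')%N)%N)%:R + 1 =
         ((\sum_(l' < n | (l' < l.+1)%N) (w (Ordinal hj) <= w l')%N)%N)%:R :> rat); last first.
        by rewrite big_prefixS /= hle /= addn1 natr1.
      wreg; apply: run_arith_end; ev; rwregs; rewrite natr1; wreg; inv.
    * move=> hle; apply: run_move_end; ev; wreg.
      apply: run_arith_end; ev; rwregs; rewrite natr1; wreg.
      have e : (\sum_(l' < n | (l' < l.+1)%N) (w (Ordinal hj) <= w l')%N =
         \sum_(l' < n | (l' < l)%N) (w (Ordinal hj) <= w l')%N)%N.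
        by rewrite big_prefixS /= (negbTE hle) /= addn0.
      rewrite e; inv.
  + move=> mb [HI2 [HW2 [HF2 [HC2 [HB2 [HJ2 [HQ2 [HL2 HS2]]]]]]]]; ev.
    rewrite HL2 (Inp_0 HI2) ltr_nat ltnn; split => //.
    apply: run_arith; ev; rwregs; wreg.
    apply: run_move; ev; rwregs; wtab mt E.
    have : CT (cnt w) mt j.+1.
      apply: (CT_ext E); last by [].
      by rewrite big_prefixn.
    have : FT mt n.+1 by apply: (FT_far E).
    clear E; intros.
    apply: run_arith_end; ev; rwregs; rewrite natr1; wreg; inv.
- move=> ma [HI1 [HW1 [HF1 [HC1 [HB1 HJ1]]]]]; ev; rewrite HJ1 (Inp_0 HI1) ltr_nat ltnn.
  by inv.
Qed.

Definition Base n k (w : 'I_n -> nat) (i : 'I_n) (m : memory) :=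
  Inp k w i m /\ m (reg rWI) = (w i)%:R /\ FT m n.+1 /\ CT (cnt w) m n /\
  m (reg rBC) = -31 - n%:R.

Definition UBody :=
  Seq (Arith Defs.Sub (R rP) (D rBC) (D rJ))
 (Seq (IfT TLe (D rM) (Ind (reg rP))
         (Seq (Arith Add (R rP) (D rJ) (Const 3))
              (IfT TLt (D rU) (Ind (reg rP)) (Move (R rU) (Ind (reg rP))) (Move (R rT) (Const 0))))
         (Move (R rT) (Const 0)))
      (Arith Add (R rJ) (D rJ) (Const 1))).

Definition UBlock :=
  Seq (Move (R rU) (Const 0)) (Seq (Move (R rJ) (Const 0)) (WhileT TLt (D rJ) (Dir 0) UBody)).

Definition Fu n (w : 'I_n -> nat) mm (j : 'I_n) : nat := if (mm <= cnt w j)%N then w j else 0%N.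

Lemma seg_u n k (w : 'I_n -> nat) (i : 'I_n) m (mm : nat) r hp :
  Base k w i m -> m (reg rM) = mm%:R -> m (reg rRES) = r -> m (reg rHP) = hp ->
  run m UBlock (fun m' => Base k w i m' /\ m' (reg rM) = mm%:R /\ m' (reg rRES) = r /\
                 m' (reg rHP) = hp /\ m' (reg rU) = (umax w mm)%:R)
      (2 + (n * (1 + (4 + 1)).+1).+1).
Proof.
move=> [HI [HW [HF [HC HB]]]] HM HR HH.
apply: run_move; ev; wreg.
apply: run_move; ev; wreg.
apply: (run_while (I := fun j m => (Inp k w i m /\ m (reg rWI) = (w i)%:R /\ FT m n.+1 /\
   CT (cnt w) m n /\ m (reg rBC) = -31 - n%:R) /\ m (reg rM) = mm%:R /\ m (reg rRES) = r /\
   m (reg rHP) = hp /\ m (reg rJ) = j%:R /\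
   m (reg rU) = ((\max_(j' < n | (j' < j)%N) Fu w mm j')%N)%:R)).
- inv; by rewrite big_pred0.
- move=> j ma hj [[HI1 [HW1 [HF1 [HC1 HB1]]]] [HM1 [HR1 [HH1 [HJ1 HU1]]]]]; ev.
  rewrite HJ1 (Inp_0 HI1) ltr_nat; split => //.
  apply: run_arith; ev; rwregs; wreg.
  apply: run_seq; apply: run_if; ev; rwregs; rw_c hj; rewrite ler_nat.
  + move=> hc; apply: run_arith; ev; rwregs; wreg.
    apply: run_if; ev; rwregs; rw_w hj; rewrite ltr_nat.
    * move=> hlt; apply: run_move_end; ev; rwregs; rw_w hj.
      have e : (\max_(j' < n | (j' < j.+1)%N) Fu w mm j')%N = w (Ordinal hj).
        rewrite big_prefixS /= /Fu hc; apply/maxn_idPr; exact: ltnW.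
      rewrite -e; wreg.
      apply: run_arith_end; ev; rwregs; rewrite natr1; wreg; inv.
    * move=> hlt; apply: run_move_end; ev; wreg.
      have e : (\max_(j' < n | (j' < j.+1)%N) Fu w mm j')%N =
               (\max_(j' < n | (j' < j)%N) Fu w mm j')%N.
        rewrite big_prefixS /= /Fu hc; apply/maxn_idPl; by rewrite leqNgt.
      apply: run_arith_end; ev; rwregs; rewrite natr1; wreg; rewrite e; inv.
  + move=> hc; apply: run_move_end; ev; wreg.
    have e : (\max_(j' < n | (j' < j.+1)%N) Fu w mm j')%N =
             (\max_(j' < n | (j' < j)%N) Fu w mm j')%N.
      by rewrite big_prefixS /= /Fu (negbTE hc) maxn0.
    apply: run_arith_end; ev; rwregs; rewrite natr1; wreg; rewrite e; inv.
- move=> ma [HB1 [HM1 [HR1 [HH1 [HJ1 HU1]]]]]; ev.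
  move: (HB1) => [HI1 _]; rewrite HJ1 (Inp_0 HI1) ltr_nat ltnn; split => //.
  have e : (\max_(j' < n | (j' < n)%N) Fu w mm j')%N = umax w mm.
    by rewrite big_prefixn /umax [in RHS]big_mkcond.
  rewrite -e; inv.
Qed.

Definition Fr n k (w : 'I_n -> nat) (i : 'I_n) (m : memory) (mm : nat) r hp g :=
  Base k w i m /\ m (reg rM) = mm%:R /\ m (reg rRES) = r /\ m (reg rHP) = hp /\
  m (reg rG) = g.

Definition GBlock := IfT TLe (D rWI) (D rU) (Move (R rG) (D rWI)) (Move (R rG) (D rU)).

Lemma seg_g n k (w : 'I_n -> nat) (i : 'I_n) m (mm : nat) r hp :
  (Base k w i m /\ m (reg rM) = mm%:R /\ m (reg rRES) = r /\
                 m (reg rHP) = hp /\ m (reg rU) = (umax w mm)%:R) ->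
  run m GBlock (fun m' => Fr k w i m' mm r hp (minn (w i) (umax w mm))%:R) 2.
Proof.
move=> [[HI [HW [HF [HC HB]]]] [HM [HR [HH HU]]]].
apply: run_if; ev; rwregs; rewrite ler_nat => h.
  apply: run_move_end; ev; rwregs; rewrite (_ : minn _ _ = w i); last exact/minn_idPl.
  wreg; rewrite /Fr /Base; inv.
apply: run_move_end; ev; rwregs; rewrite (_ : minn _ _ = umax w mm); last first.
  by apply/minn_idPr; rewrite ltnW // ltnNge.
wreg; rewrite /Fr /Base; inv.
Qed.

Definition YBody :=
 (Seq (Arith Defs.Sub (R rIDX) (D rM) (Const 1))
 (Seq (Arith Defs.Sub (R rP) (Const (-30)) (D rIDX))
 (Seq (Move (R rT) (Ind (reg rP)))
 (Seq (Arith Defs.Sub (R rP) (Const (-30)) (D rX))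
 (Seq (Move (R rT2) (Ind (reg rP)))
 (Seq (Arith Div (R rT) (D rT) (D rT2))
 (Seq (Arith Defs.Sub (R rIDX) (D rIDX) (D rX))
 (Seq (Arith Defs.Sub (R rP) (Const (-30)) (D rIDX))
 (Seq (Move (R rT2) (Ind (reg rP)))
 (Seq (Arith Div (R rT) (D rT) (D rT2))
 (Seq (Arith Defs.Sub (R rP) (Const (-30)) (D rNM))
 (Seq (Move (R rT2) (Ind (reg rP)))
 (Seq (Arith Mul (R rT) (D rT) (D rT2))
 (Seq (Arith Defs.Sub (R rP) (Const (-30)) (D rY))
 (Seq (Move (R rT2) (Ind (reg rP)))
 (Seq (Arith Div (R rT) (D rT) (D rT2))
 (Seq (Arith Defs.Sub (R rIDX) (D rNM) (D rY))
 (Seq (Arith Defs.Sub (R rP) (Const (-30)) (D rIDX))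
 (Seq (Move (R rT2) (Ind (reg rP)))
 (Seq (Arith Div (R rT) (D rT) (D rT2))
 (Seq (Arith Add (R rIDX) (D rX) (D rY))
 (Seq (Arith Defs.Sub (R rP) (Const (-30)) (D rIDX))
 (Seq (Move (R rT2) (Ind (reg rP)))
 (Seq (Arith Mul (R rT) (D rT) (D rT2))
 (Seq (Arith Defs.Sub (R rIDX) (Dir 0) (D rIDX))
 (Seq (Arith Defs.Sub (R rIDX) (D rIDX) (Const 1))
 (Seq (Arith Defs.Sub (R rP) (Const (-30)) (D rIDX))
 (Seq (Move (R rT2) (Ind (reg rP)))
 (Seq (Arith Mul (R rT) (D rT) (D rT2))
 (Seq (Arith Defs.Sub (R rP) (Const (-30)) (Dir 0))
 (Seq (Move (R rT2) (Ind (reg rP)))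
 (Seq (Arith Div (R rT) (D rT) (D rT2))
 (Seq (Arith Add (R rH) (D rH) (D rT))
 (Arith Add (R rY) (D rY) (Const 1))))))))))))))))))))))))))))))))))).

Lemma subr1n (a : nat) : (1 <= a)%N -> a%:R - 1 = (a - 1)%:R :> rat.
Proof. by move=> h; rewrite natrB. Qed.

Lemma seg_y n k (w : 'I_n -> nat) (i : 'I_n) m (mm x : nat) r hp g hx :
  (1 <= mm)%N -> (mm <= n)%N -> (x < mm)%N ->
  Fr k w i m mm r hp g -> m (reg rX) = x%:R -> m (reg rNM) = (n - mm)%:R ->
  m (reg rH) = hx -> m (reg rY) = 0%:R ->
  run m (WhileT TLe (D rY) (D rNM) YBody)
    (fun m' => Fr k w i m' mm r hp g /\ m' (reg rX) = x%:R /\ m' (reg rNM) = (n - mm)%:R /\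
       m' (reg rH) = hx + \sum_(y < n - mm + 1) termv n mm x y)
    ((n - mm + 1) * 34.+1).+1.
Proof.
move=> h1 hmn hxm [[HI [HW [HF [HC HB]]]] [HM [HR [HH HG]]]] HX HNM HH0 HY0.
apply: (run_while (I := fun yy m => (Inp k w i m /\ m (reg rWI) = (w i)%:R /\ FT m n.+1 /\
   CT (cnt w) m n /\ m (reg rBC) = -31 - n%:R) /\ m (reg rM) = mm%:R /\ m (reg rRES) = r /\
   m (reg rHP) = hp /\ m (reg rG) = g /\ m (reg rX) = x%:R /\ m (reg rNM) = (n - mm)%:R /\
   m (reg rY) = yy%:R /\ m (reg rH) = hx + \sum_(y < yy) termv n mm x y)).
- inv; by rewrite big_ord0 addr0.
- move=> yy ma hy [[HI1 [HW1 [HF1 [HC1 HB1]]]] [HM1 [HR1 [HH1 [HG1 [HX1 [HNM1 [HY1 HS1]]]]]]]].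
  ev; rewrite HY1 HNM1 ler_nat; split; first by lia.
  have hy' : (yy <= n - mm)%N by lia.
  apply: run_arith; ev; rwregs; rewrite subr1n //; wreg.
  apply: run_arith; ev; rwregs; wreg.
  apply: run_move; ev; rwregs; rft; wreg.
  apply: run_arith; ev; rwregs; wreg.
  apply: run_move; ev; rwregs; rft; wreg.
  apply: run_arith; ev; rwregs; wreg.
  apply: run_arith; ev; rwregs; rewrite -natrB; last by lia.
  wreg.
  apply: run_arith; ev; rwregs; wreg.
  apply: run_move; ev; rwregs; rft; wreg.
  apply: run_arith; ev; rwregs; wreg.
  apply: run_arith; ev; rwregs; wreg.
  apply: run_move; ev; rwregs; rft; wreg.
  apply: run_arith; ev; rwregs; wreg.
  apply: run_arith; ev; rwregs; wreg.
  apply: run_move; ev; rwregs; rft; wreg.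
  apply: run_arith; ev; rwregs; wreg.
  apply: run_arith; ev; rwregs; rewrite -natrB; last by lia.
  wreg.
  apply: run_arith; ev; rwregs; wreg.
  apply: run_move; ev; rwregs; rft; wreg.
  apply: run_arith; ev; rwregs; wreg.
  apply: run_arith; ev; rwregs; rewrite -natrD; wreg.
  apply: run_arith; ev; rwregs; wreg.
  apply: run_move; ev; rwregs; rft; wreg.
  apply: run_arith; ev; rwregs; wreg.
  apply: run_arith; ev; rwregs; rinp; rewrite -natrB; last by lia.
  wreg.
  apply: run_arith; ev; rwregs; rewrite subr1n; last by lia.
  wreg.
  apply: run_arith; ev; rwregs; wreg.
  apply: run_move; ev; rwregs; rft; wreg.
  apply: run_arith; ev; rwregs; wreg.
  apply: run_arith; ev; rinp; wreg.
  apply: run_move; ev; rwregs; rft; wreg.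
  apply: run_arith; ev; rwregs; wreg.
  apply: run_arith; ev; rwregs.
  rewrite (_ : _ + _ = hx + \sum_(y < yy.+1) termv n mm x y); last first.
    by rewrite big_ord_recr /= addrA.
  wreg.
  apply: run_arith_end; ev; rwregs; rewrite natr1; wreg; inv.
- move=> ma [HB1 [HM1 [HR1 [HH1 [HG1 [HX1 [HNM1 [HY1 HS1]]]]]]]].
  ev; rewrite HY1 HNM1 ler_nat; split; first by apply/negbTE; rewrite -ltnNge; lia.
  rewrite /Fr; inv.
Qed.

Definition XBody :=
  Seq (IfT TLt (D rX) (Dir 1)
          (Seq (Move (R rY) (Const 0)) (WhileT TLe (D rY) (D rNM) YBody))
          (Move (R rT) (Const 0)))
      (Arith Add (R rX) (D rX) (Const 1)).

Definition HBlock :=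
  Seq (Move (R rH) (Const 0)) (Seq (Move (R rX) (Const 0))
 (Seq (Arith Defs.Sub (R rNM) (Dir 0) (D rM)) (WhileT TLt (D rX) (D rM) XBody))).

Definition Hx n k mm x : rat :=
  \sum_(x' < x) (if (x' < k)%N then \sum_(y < n - mm + 1) termv n mm x' y else 0).

Lemma seg_h n k (w : 'I_n -> nat) (i : 'I_n) m (mm : nat) r hp g :
  (1 <= mm)%N -> (mm <= n)%N -> Fr k w i m mm r hp g ->
  run m HBlock (fun m' => Fr k w i m' mm r hp g /\ m' (reg rH) = Hterm n k mm)
    (3 + (mm * ((1 + ((n - mm + 1) * 34.+1).+1).+1 + 1).+1).+1).
Proof.
move=> h1 hmn [[HI [HW [HF [HC HB]]]] [HM [HR [HH HG]]]].
apply: run_move; ev; wreg.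
apply: run_move; ev; wreg.
apply: run_arith; ev; rwregs; rinp; rewrite -natrB //; wreg.
apply: (run_while (I := fun x m => (Inp k w i m /\ m (reg rWI) = (w i)%:R /\ FT m n.+1 /\
   CT (cnt w) m n /\ m (reg rBC) = -31 - n%:R) /\ m (reg rM) = mm%:R /\ m (reg rRES) = r /\
   m (reg rHP) = hp /\ m (reg rG) = g /\ m (reg rNM) = (n - mm)%:R /\
   m (reg rX) = x%:R /\ m (reg rH) = Hx n k mm x)).
- inv; by rewrite /Hx big_ord0.
- move=> x ma hx [[HI1 [HW1 [HF1 [HC1 HB1]]]] [HM1 [HR1 [HH1 [HG1 [HNM1 [HX1 HS1]]]]]]].
  ev; rewrite HX1 HM1 ltr_nat; split => //.
  apply: run_seq; apply: run_if; ev; rwregs; rinp; rewrite ltr_nat => hk.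
  + apply: run_move; ev; wreg.
    have Hfr : Fr k w i m3 mm r hp g by rewrite /Fr /Base; inv.
    apply: (run_weaken _ (seg_y h1 hmn hx Hfr _ _ _ _)); try eassumption.
    move=> mb [[[HI2 [HW2 [HF2 [HC2 HB2]]]] [HM2 [HR2 [HH2 HG2]]]] [HX2 [HNM2 HS2]]].
    have e : Hx n k mm x + \sum_(y < n - mm + 1) termv n mm x y = Hx n k mm x.+1.
      by rewrite /Hx big_ord_recr /= hk.
    rewrite e in HS2.
    apply: run_arith_end; ev; rwregs; rewrite natr1; wreg; inv.
  + apply: run_move_end; ev; wreg.
    apply: run_arith_end; ev; rwregs; rewrite natr1; wreg.
    rewrite (_ : Hx n k mm x.+1 = Hx n k mm x); last first.
      by rewrite /Hx big_ord_recr /= (negbTE hk) addr0.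
    inv.
- move=> ma [HB1 [HM1 [HR1 [HH1 [HG1 [HNM1 [HX1 HS1]]]]]]].
  ev; rewrite HX1 HM1 ltr_nat ltnn; split => //; rewrite /Fr; inv.
Qed.

Definition UpdBlock :=
  Seq (Arith Defs.Sub (R rT) (D rH) (D rHP)) (Seq (Arith Mul (R rT) (D rT) (D rG))
 (Seq (Arith Add (R rRES) (D rRES) (D rT)) (Seq (Move (R rHP) (D rH))
      (Arith Add (R rM) (D rM) (Const 1))))).

Definition MBody := Seq UBlock (Seq GBlock (Seq HBlock UpdBlock)).

Definition Pmain :=
  Seq (Move (R rRES) (Const 0)) (Seq (Move (R rHP) (Const 0))
 (Seq (Move (R rM) (Const 1)) (WhileT TLe (D rM) (Dir 0) MBody))).

Definition THb n := (3 + (n * ((1 + ((n + 1) * 34.+1).+1).+1 + 1).+1).+1)%N.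
Definition TMb n := ((2 + (n * (1 + (4 + 1)).+1).+1) + (2 + (THb n + 5)))%N.

Lemma THb_ge n mm : (mm <= n)%N ->
  (3 + (mm * ((1 + ((n - mm + 1) * 34.+1).+1).+1 + 1).+1).+1 <= THb n)%N.
Proof.
move=> h; rewrite /THb.
have hL : (n - mm + 1 <= n + 1)%N by lia.
move: (n - mm + 1)%N hL => L hL.
have := leq_mul hL (leqnn 35); move: (L * 35)%N ((n+1) * 35)%N => a b hab.
have := leq_mul h (isT : (0 < 1)%N); nia.
Qed.

Definition SM n k (w : 'I_n -> nat) (i : 'I_n) (m : memory) :=
  Base k w i m /\ m (reg rRES) = formula k w i.

Lemma seg_main n k (w : 'I_n -> nat) (i : 'I_n) m :
  Base k w i m -> run m Pmain (SM k w i) (3 + (n * (TMb n).+1).+1).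
Proof.
move=> [HI [HW [HF [HC HB]]]].
apply: run_move; ev; wreg.
apply: run_move; ev; wreg.
apply: run_move; ev; wreg.
apply: (run_while (I := fun mi m => (Inp k w i m /\ m (reg rWI) = (w i)%:R /\ FT m n.+1 /\
   CT (cnt w) m n /\ m (reg rBC) = -31 - n%:R) /\ m (reg rM) = (mi.+1)%:R /\
   m (reg rRES) = \sum_(m' < mi) (Hs n k m'.+1 - Hs n k m') * (minn (w i) (umax w m'.+1))%:R /\
   m (reg rHP) = Hs n k mi)).
- inv; by rewrite big_ord0.
- move=> mi ma hmi [HB1 [HM1 [HR1 HH1]]].
  move: (HB1) => [HI1 _].
  ev; rewrite HM1 (Inp_0 HI1) ler_nat; split => //.
  apply: run_seq; apply: (run_weaken _ (seg_u HB1 HM1 HR1 HH1)) => mb Hb.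
  apply: run_seq; apply: (run_weaken _ (seg_g Hb)) => mc Hc.
  apply: run_seq; apply: (run_mono (THb_ge hmi)).
  apply: (run_weaken _ (seg_h (isT : (1 <= mi.+1)%N) hmi Hc)).
  move=> md [[[HI2 [HW2 [HF2 [HC2 HB2]]]] [HM2 [HR2 [HH2 HG2]]]] HS2].
  apply: run_arith; ev; rwregs; wreg.
  apply: run_arith; ev; rwregs; wreg.
  apply: run_arith; ev; rwregs.
  rewrite (_ : _ + _ = \sum_(m' < mi.+1) (Hs n k m'.+1 - Hs n k m') *
                     (minn (w i) (umax w m'.+1))%:R); last by rewrite big_ord_recr.
  wreg.
  apply: run_move; ev; rwregs.
  rewrite (_ : Hterm n k mi.+1 = Hs n k mi.+1) //.
  wreg.
  apply: run_arith_end; ev; rwregs; rewrite natr1; wreg; inv.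
- move=> ma [HB1 [HM1 [HR1 HH1]]]; move: (HB1) => [HI1 _].
  ev; rewrite HM1 (Inp_0 HI1) ler_nat ltnn; split => //.
Qed.

Definition Pfin := Move (DDir 0) (D rRES).
Definition Prog := Seq Pwi (Seq Pfact (Seq Pcnt (Seq Pmain Pfin))).

Definition Ttot n := (2 + ((3 + (n * 7).+1) +
   ((2 + (n * (4 + ((n * (1 + (2 + 1)).+1).+1 + 3)).+1).+1) +
    ((3 + (n * (TMb n).+1).+1) + 1))))%N.

Lemma run_prog n k (w : 'I_n -> nat) (i : 'I_n) :
  run (init_mem k w i) Prog (fun m' => m' 0 = formula k w i) (Ttot n).
Proof.
apply: run_seq; apply: (run_weaken _ (seg_wi k w i)) => m1 h1.
apply: run_seq; apply: (run_weaken _ (seg_fact h1)) => m2 h2.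
apply: run_seq; apply: (run_weaken _ (seg_cnt h2)) => m3 h3.
apply: run_seq; apply: (run_weaken _ (seg_main h3)) => m4 [hb4 hr4].
apply: run_move_end; ev; rewrite upd_same; exact: hr4.
Qed.

Lemma Ttot_le n : (Ttot n <= 500 * n ^ 3 + 500)%N.
Proof.
have -> : (n ^ 3 = n * (n * n))%N by rewrite !expnS expn0 muln1.
rewrite /Ttot /TMb /THb; nia.
Qed.

Theorem corollary4 :
  exists (P : cmd) (C : nat),
    forall (n k : nat) (w : 'I_n -> nat) (i : 'I_n),
      exists (t : nat) (m' : memory),
        [/\ exec (init_mem k w i) P t m',
            m' 0 = shapley (fun S => (topk_game k w S)%:R) i
          & (t <= C * n ^ 3 + C)%N].
Proof.
exists Prog, 500%N => n k w i.
have [t [m' [e ht q]]] := run_prog k w i.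
exists t, m'; split => //.
  by rewrite shapley_formula.
exact: leq_trans ht (Ttot_le n).
Qed.
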